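(* Let $K$ be a field, let $m,n,t$ be positive integers with $t\le m$, $t\le n$, let $X=(x_{ij})$ be an $m\times n$ matrix of indeterminates, and let $I_t\subseteq K[X]$ be the ideal generated by all $t\times t$ minors of $X$. Then $I_t$ contains no nonzero polynomial with at most $t!/2$ terms; equivalently, the shortness of $I_t$ is at least $t!/2+1$.
   Context: $K[X]$ denotes the polynomial ring over $K$ in the $mn$ indeterminates $x_{ij}$. The number of terms of a polynomial is the number of monomials appearing in it with nonzero coefficient. The shortness of an ideal $I$ is the minimal $s$ such that $I$ contains a nonzero polynomial with at most $s$ terms. *)

(* Defs.v *)
From HB Require Import structures.
From mathcomp Require Import all_boot all_order all_algebra.
From mathcomp Require Import multinomials.mpoly.
Set Implicit Arguments. Unset Strict Implicit. Unset Printing Implicit Defensive.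
Import GRing.Theory.
Local Open Scope ring_scope.

Definition genmx (K : fieldType) (m n : nat) : 'M[{mpoly K[m * n]}]_(m, n) :=
  \matrix_(i < m, j < n) 'X_(mxvec_index i j).

Definition incr (t k : nat) (f : {ffun 'I_t -> 'I_k}) : bool :=
  [forall i : 'I_t, forall j : 'I_t, (i < j)%N ==> (f i < f j)%N].

Definition minor (K : fieldType) (m n t : nat)
    (f : {ffun 'I_t -> 'I_m}) (g : {ffun 'I_t -> 'I_n}) : {mpoly K[m * n]} :=
  \det (\matrix_(i < t, j < t) genmx K m n (f i) (g j)).

Definition in_minor_ideal (K : fieldType) (m n : nat) (t : nat) (p : {mpoly K[m * n]}) : Prop :=
  exists a : {ffun 'I_t -> 'I_m} -> {ffun 'I_t -> 'I_n} -> {mpoly K[m * n]},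
    p = \sum_(f : {ffun 'I_t -> 'I_m} | incr f)
          \sum_(g : {ffun 'I_t -> 'I_n} | incr g) a f g * minor K f g.

Definition nterms (K : fieldType) (N : nat) (p : {mpoly K[N]}) : nat :=
  size (msupp p).
Arguments in_minor_ideal K m n t p : clear implicits.

(* Main.v *)
Require Import Defs.
From HB Require Import structures.
From mathcomp Require Import all_boot all_order all_algebra.
From mathcomp Require Import multinomials.mpoly.
Set Implicit Arguments. Unset Strict Implicit. Unset Printing Implicit Defensive.
Import Order.TTheory GRing.Theory.
Local Open Scope ring_scope.

Local Open Scope nat_scope.
Section Comb.
Variables (T : eqType) (m n : nat) (rw : 'I_m -> T -> 'X_{1..n}).
Hypothesis rinj : forall e e', (forall c, rw c e = rw c e') -> e = e'.

Lemma exmax (F : T -> 'X_{1..n}) (s : seq T) : s != [::] ->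
  exists x, x \in s /\ forall y, y \in s -> (F y <= F x)%O.
Proof.
elim: s => [//|x s IH] _.
case: (eqVneq s [::]) => [->|/IH [z [zs Hz]]].
  by exists x; split; rewrite ?mem_head // => y; rewrite inE => /eqP ->.
case: (leP (F x) (F z)) => Hxz.
  exists z; split; first by rewrite inE zs orbT.
  by move=> y; rewrite inE => /orP [/eqP ->|/Hz].
exists x; split; first by rewrite mem_head.
move=> y; rewrite inE => /orP [/eqP ->//|/Hz Hy].
exact: (le_trans Hy (ltW Hxz)).
Qed.

Lemma count_le1 (P : pred 'I_m) (R : seq 'I_m) : uniq R ->
  (forall a b, a \in R -> b \in R -> P a -> P b -> a = b) -> count P R <= 1.
Proof.
elim: R => [//|x R IH] /= /andP [xR uR] H.
case Px: (P x) => /=.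
  rewrite (@eq_in_count _ _ pred0) ?count_pred0 //.
  move=> y yR /=; apply/negP => Py.
  have yR' : y \in x :: R by rewrite inE yR orbT.
  have := H x y (mem_head _ _) yR' Px Py.
  by move=> exy; move: xR; rewrite exy yR.
apply: IH => // a b aR bR; apply: H; by rewrite inE ?aR ?bR orbT.
Qed.

Lemma sum_count_le (P : 'I_m -> T -> bool) (R : seq 'I_m) (s : seq T) :
  (forall e, e \in s -> count (fun a => P a e) R <= 1) ->
  \sum_(a <- R) count (P a) s <= size s.
Proof.
elim: s => [|e s IH] H.
  by rewrite big1_seq.
rewrite /=.
have -> : \sum_(a <- R) count (P a) (e :: s) =
   count (fun a => P a e) R + \sum_(a <- R) count (P a) s.
  rewrite /= big_split /=; congr (_ + _).
  by elim: R {H IH} => [|x R IHR]; rewrite ?big_nil ?big_cons //= IHR.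
rewrite -add1n leq_add //; first by apply: H; rewrite mem_head.
by apply: IH => x xs; apply: H; rewrite inE xs orbT.
Qed.

Lemma sum_const_seq (R : seq 'I_m) (c : nat) : \sum_(a <- R) c = size R * c.
Proof. by elim: R => [|x R IH]; rewrite ?big_nil ?big_cons //= IH mulSn. Qed.

Definition moves (R : seq 'I_m) (S : seq T) :=
  forall a b, a \in R -> b \in R -> a != b -> forall e, e \in S ->
   exists e', [/\ e' \in S, e' != e,
     (forall c, c != a -> c != b -> rw c e' = rw c e) &
     (rw a e' + rw b e' = rw a e + rw b e)%MM].

Lemma count_lemma k : forall (R : seq 'I_m) (S : seq T), uniq R -> size R = k ->
  uniq S -> S != [::] -> moves R S -> k`! <= size S.
Proof.
elim: k => [|k IH] R S uR sR uS nS mv.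
  by rewrite fact0 lt0n size_eq0.
pose Pa a e := all (fun y => (rw a y <= rw a e)%O) S.
pose Sa a := [seq e <- S | Pa a e].
have HSa : forall a, a \in R -> k`! <= size (Sa a).
  move=> a aR; apply: (IH (rem a R)).
  - exact: rem_uniq.
  - by rewrite size_rem // sR.
  - exact: filter_uniq.
  - have [x [xS Hx]] := exmax (rw a) nS.
    apply/eqP => E; have : x \in Sa a by rewrite mem_filter xS andbT; apply/allP.
    by rewrite E.
  - move=> c d; rewrite !(mem_rem_uniq _ uR) => /andP [ca cR] /andP [da dR] cd e.
    rewrite mem_filter => /andP [Pe eS].
    have [e' [e'S e'e H1 H2]] := mv c d cR dR cd e eS.
    exists e'; split => //; rewrite mem_filter e'S andbT.
    by rewrite /Pa (H1 a) 1?eq_sym //.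
have disj : forall e, e \in S -> count (fun a => Pa a e) R <= 1.
  move=> e eS; apply: count_le1 => // a b aR bR Pae Pbe.
  apply/eqP/negPn/negP => ab.
  have [e' [e'S e'e H1 H2]] := mv a b aR bR ab e eS.
  have la : (rw a e' <= rw a e)%O by exact: (allP Pae).
  have lb : (rw b e' <= rw b e)%O by exact: (allP Pbe).
  have ea : rw a e' = rw a e.
    move: la; rewrite le_eqVlt => /orP [/eqP //|lt].
    by have := ltmc_le_add lt lb; rewrite H2 ltxx.
  have eb : rw b e' = rw b e.
    move: lb; rewrite le_eqVlt => /orP [/eqP //|lt].
    by have := lemc_lt_add la lt; rewrite H2 ltxx.
  move/eqP: e'e; apply; apply: rinj => c.
  case: (eqVneq c a) => [->//|ca]; case: (eqVneq c b) => [->//|cb].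
  exact: H1.
have := sum_count_le disj.
have : \sum_(a <- R) k`! <= \sum_(a <- R) count (Pa a) S.
  rewrite big_seq_cond [X in _ <= X]big_seq_cond; apply: leq_sum => a /andP [aR _].
  by rewrite -size_filter; apply: HSa.
rewrite sum_const_seq sR factS => h1 h2; exact: leq_trans h1 h2.
Qed.

End Comb.
Local Open Scope ring_scope.

Section Subst.
Variables (K : fieldType) (m n : nat).
Local Notation N := (m * n)%N.
Local Notation ix := (@mxvec_index m n).

Definition rc (k : 'I_N) : 'I_m * 'I_n :=
  enum_val (cast_ord (esym (mxvec_cast m n)) k).

Lemma rcK i j : rc (ix i j) = (i, j).
Proof. by rewrite /rc /mxvec_index cast_ordK enum_rankK. Qed.

Lemma ixK k : ix (rc k).1 (rc k).2 = k.
Proof. by case/mxvec_indexP: k => i j; rewrite rcK. Qed.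

Lemma ix_eq i j i' j' : (ix i j == ix i' j') = (i == i') && (j == j').
Proof.
apply/eqP/andP => [E|[/eqP -> /eqP ->]//].
by have := rcK i j; rewrite E rcK => -[-> ->].
Qed.

Definition sub (phi : 'I_m -> 'I_m) (k : 'I_N) : 'I_N := ix (phi (rc k).1) (rc k).2.

Lemma subE phi i j : sub phi (ix i j) = ix (phi i) j.
Proof. by rewrite /sub rcK. Qed.

Definition lq (phi : 'I_m -> 'I_m) : N.-tuple {mpoly K[N]} :=
  [tuple 'X_(sub phi k) | k < N].

Definition psi phi (p : {mpoly K[N]}) := p \mPo lq phi.

Definition mu phi (e : 'X_{1..N}) : 'X_{1..N} := (\sum_(k < N) U_(sub phi k) *+ e k)%MM.

Lemma psiXU phi k : psi phi 'X_k = 'X_(sub phi k).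
Proof. by rewrite /psi comp_mpolyXU -tnth_nth tnth_mktuple. Qed.

Lemma psiX phi e : psi phi 'X_[e] = 'X_[mu phi e].
Proof.
rewrite /psi comp_mpolyX /mu -mprodXnE.
by apply: eq_bigr => k _; rewrite tnth_mktuple.
Qed.

Lemma psiE phi p : psi phi p = \sum_(e <- msupp p) p@_e *: 'X_[mu phi e].
Proof. by rewrite /psi comp_mpolyEX; apply/eq_bigr => e _; rewrite -psiX. Qed.

Lemma psi_coef phi p u : (psi phi p)@_u = \sum_(e <- msupp p | mu phi e == u) p@_e.
Proof.
rewrite psiE raddf_sum /= [RHS]big_mkcond /=; apply: eq_bigr => e _.
by rewrite mcoeffZ mcoeffX; case: (mu phi e == u); rewrite ?mulr1 ?mulr0.
Qed.

Lemma psi_size phi p : (size (msupp (psi phi p)) <= size (msupp p))%N.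
Proof.
rewrite -[X in (_ <= X)%N](size_map (mu phi)); apply: uniq_leq_size; first exact: msupp_uniq.
move=> u; rewrite mcoeff_msupp psi_coef => H.
have : has (fun e => mu phi e == u) (msupp p).
  apply/negPn/negP => /hasPn Hn; move/eqP: H; apply.
  rewrite big_seq_cond big1 // => e /andP [eS Pe].
  by have := Hn e eS; rewrite Pe.
by case/hasP => e eS /eqP <-; apply: map_f.
Qed.

Lemma psi_id p : psi id p = p.
Proof.
rewrite /psi -[RHS]comp_mpoly_id; congr (_ \mPo _).
by apply: eq_from_tnth => k; rewrite !tnth_mktuple /sub ixK.
Qed.

Lemma psi_comp phi1 phi2 p : psi (phi2 \o phi1) p = psi phi2 (psi phi1 p).
Proof.
rewrite /psi comp_mpolyEX [X in _ = _ X]comp_mpolyEX linear_sum /=.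
apply: eq_bigr => e _; rewrite linearZ /=; congr (_ *: _).
rewrite !comp_mpolyX rmorph_prod /=; apply: eq_bigr => k _.
rewrite rmorphXn /= !tnth_mktuple; congr (_ ^+ _).
have := psiXU phi2 (sub phi1 k); rewrite /psi => ->.
by case/mxvec_indexP: k => i j; rewrite !subE.
Qed.

Definition merge (a b : 'I_m) (r : 'I_m) : 'I_m := if r == b then a else r.
Definition rowm (r : 'I_m) (e : 'X_{1..N}) : 'X_{1..n} := [multinom e (ix r j) | j < n].

Lemma muE phi e k0 : mu phi e k0 = (\sum_(k < N | sub phi k == k0) e k)%N.
Proof.
rewrite /mu mnm_sumE [RHS]big_mkcond; apply: eq_bigr => k _.
by rewrite mulmnE mnm1E; case: (sub phi k == k0); rewrite ?mul1n ?mul0n.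
Qed.

Lemma mu_merge_other a b e r j : r != a -> r != b ->
  mu (merge a b) e (ix r j) = e (ix r j).
Proof.
move=> ra rb; rewrite muE (eq_bigl (fun k => k == ix r j)) ?big_pred1_eq // => k.
case/mxvec_indexP: k => i' j'; rewrite subE !ix_eq /merge.
case: (eqVneq i' b) => [->|ib] //.
by rewrite ![_ == r]eq_sym (negbTE ra) (negbTE rb).
Qed.

Lemma mu_merge_a a b e j : a != b ->
  mu (merge a b) e (ix a j) = (e (ix a j) + e (ix b j))%N.
Proof.
move=> ab; rewrite muE (bigD1 (ix a j)) /=; last first.
  by rewrite subE /merge (negbTE ab).
congr (_ + _)%N.
rewrite (eq_bigl (fun k => k == ix b j)) ?big_pred1_eq // => k.
case/mxvec_indexP: k => i' j'; rewrite subE !ix_eq /merge.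
case: (eqVneq i' b) => [->|ib] /=.
  by rewrite eqxx [b == a]eq_sym (negbTE ab) /= andbT.
by case: (i' == a) => //=; rewrite andbN.
Qed.

Lemma rowm_inj e e' : (forall c, rowm c e = rowm c e') -> e = e'.
Proof.
move=> H; apply/mnmP => k; case/mxvec_indexP: k => i j.
by move/mnmP: (H i) => /(_ j); rewrite !mnmE.
Qed.

Lemma mu_merge_move a b u u' : a != b -> mu (merge a b) u' = mu (merge a b) u ->
  (forall c, c != a -> c != b -> rowm c u' = rowm c u) /\
  (rowm a u' + rowm b u' = rowm a u + rowm b u)%MM.
Proof.
move=> ab E; split.
  move=> c ca cb; apply/mnmP => j; rewrite !mnmE.
  by rewrite -(mu_merge_other u' j ca cb) -(mu_merge_other u j ca cb) E.
apply/mnmP => j; rewrite !mnmDE !mnmE -!mu_merge_a //.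
by rewrite E.
Qed.

Lemma psi_ext phi1 phi2 p : phi1 =1 phi2 -> psi phi1 p = psi phi2 p.
Proof.
move=> E; rewrite /psi; congr (_ \mPo _).
by apply: eq_from_tnth => k; rewrite !tnth_mktuple /sub E.
Qed.

Lemma psiM phi x y : psi phi (x * y) = psi phi x * psi phi y.
Proof. exact: rmorphM. Qed.

Lemma psi_minor phi t (f : {ffun 'I_t -> 'I_m}) (g : {ffun 'I_t -> 'I_n}) (i1 i2 : 'I_t) :
  i1 != i2 -> phi (f i1) = phi (f i2) -> psi phi (minor K f g) = 0.
Proof.
move=> ne E; rewrite /minor /psi -det_map_mx.
apply: (determinant_alternate ne) => j; rewrite !mxE.
change (psi phi 'X_(ix (f i1) (g j)) = psi phi 'X_(ix (f i2) (g j))).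
by rewrite !psiXU !subE E.
Qed.

Lemma psi_ideal phi t p : in_minor_ideal K m n t p ->
  (#|[set phi x | x in 'I_m]| < t)%N -> psi phi p = 0.
Proof.
case=> a -> lt; rewrite /psi raddf_sum big1 // => f _.
rewrite raddf_sum big1 // => g _.
change (psi phi (a f g * minor K f g) = 0); rewrite psiM.
case: (boolP (injectiveb (fun i => phi (f i)))) => [/injectiveP inj|/injectivePn [i1 [i2 ne E]]].
  have : (#|[set phi (f i) | i in 'I_t]| <= #|[set phi x | x in 'I_m]|)%N.
    apply: subset_leq_card; apply/subsetP => y /imsetP [i _ ->]; exact: imset_f.
  by rewrite (card_imset _ inj) card_ord leqNgt lt.
by have := psi_minor g ne E; rewrite /psi => ->; rewrite mulr0.
Qed.

End Subst.

Theorem theorem3p1 (K : fieldType) (m n t : nat)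
    (ht : (0 < t)%N) (hm : (t <= m)%N) (hn : (t <= n)%N)
    (p : {mpoly K[m * n]}) :
  in_minor_ideal K m n t p -> p != 0 -> (t`! < 2 * nterms p)%N.
Proof.
move=> Hid p0.
pose P k := [exists phi : {ffun 'I_m -> 'I_m},
   (#|[set phi x | x in 'I_m]| == k) && (psi phi p != 0)].
have Pm : exists k, P k.
  exists m; apply/existsP; exists [ffun x => x].
  rewrite (psi_ext (phi2 := id)) ?psi_id ?p0 ?andbT; last by move=> x; rewrite ffunE.
  have -> : [set ([ffun x => x] : {ffun 'I_m -> 'I_m}) x | x in 'I_m] = [set: 'I_m].
    by apply/setP => x; rewrite in_setT; apply/imsetP; exists x; rewrite ?ffunE.
  by rewrite cardsT card_ord.
case: (ex_minnP Pm) => k0 /existsP [phi0 /andP [/eqP card0 nz0]] minP.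
set g := psi phi0 p in nz0.
have kt : (t <= k0)%N.
  rewrite leqNgt; apply/negP => lt.
  by move: nz0; rewrite /g (psi_ideal Hid) ?card0 ?eqxx.
pose A := [set phi0 x | x in 'I_m].
have mv : moves (@rowm m n) (enum A) (msupp g).
  move=> a b; rewrite !mem_enum => aI bI ab u uS.
  pose phi' := [ffun x => merge a b (phi0 x)].
  have lt : (#|[set phi' x | x in 'I_m]| < k0)%N.
    rewrite -card0 (cardsD1 b A) bI add1n ltnS.
    apply: subset_leq_card; apply/subsetP => y /imsetP [x _ ->].
    rewrite ffunE /merge in_setD1; case: ifP => [_|ne].
      by rewrite ab aI.
    by rewrite ne imset_f.
  have z : psi phi' p = 0.
    apply/eqP; apply/negPn/negP => nz.
    have : P #|[set phi' x | x in 'I_m]| by apply/existsP; exists phi'; rewrite eqxx nz.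
    by move/minP; rewrite leqNgt lt.
  rewrite (psi_ext (phi2 := merge a b \o phi0)) in z; last by move=> x; rewrite ffunE.
  rewrite psi_comp -/g in z.
  have c := psi_coef (merge a b) g (mu (merge a b) u); rewrite z mcoeff0 in c.
  have : has (fun u' => (u' != u) && (mu (merge a b) u' == mu (merge a b) u)) (msupp g).
    apply/negPn/negP => /hasPn H.
    rewrite big_mkcond (bigD1_seq u) ?msupp_uniq //= eqxx big1_seq in c.
      by move: uS; rewrite mcoeff_msupp; rewrite addr0 in c; rewrite -c eqxx.
    move=> u' /andP [ne u'S]; have := H u' u'S; rewrite ne /=.
    by move/negbTE => ->.
  case/hasP => u' u'S /andP [ne /eqP E].
  have [H1 H2] := mu_merge_move ab E.
  by exists u'; split.
have cnt := count_lemma (@rowm_inj m n) (enum_uniq (mem A)) (esym (cardE A))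
   (msupp_uniq g) _ mv.
rewrite card0 in cnt.
have nzs : msupp g != [::] by rewrite msupp_eq0.
have := cnt nzs => h.
have h2 := psi_size phi0 p; rewrite -/g in h2.
have h3 : (t`! <= nterms p)%N.
  by rewrite /nterms; apply: leq_trans (leq_fact kt) (leq_trans h h2).
have np : (0 < nterms p)%N := leq_trans (fact_gt0 t) h3.
apply: (leq_ltn_trans h3).
by rewrite mul2n -addnn -{1}[nterms p]add0n ltn_add2r.
Qed.
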